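(* For every $k>0$ and all $m$-dimensional bodies $A_1,A_2$, $\delta_k(A_1\cup A_2)+\delta_k(A_1\cap A_2)\ge\delta_k(A_1)+\delta_k(A_2)$.
   Context: An $m$-dimensional body is a compact subset of $\mathbb R_+^m$. For $k>0$, its $k$-deficiency is $\delta_k(A)=|A|-k\sum_{j=1}^m|A_{[m]\setminus\{j\}}|$, where $A_{[m]\setminus\{j\}}=\{\mathbf x_{-j}:\mathbf x\in A\}\subseteq\mathbb R^{m-1}$ is the projection deleting coordinate $j$ and $|\cdot|$ denotes Lebesgue measure of the relevant dimension. *)

(* Defs.v *)
From HB Require Import structures.
From mathcomp Require Import all_boot all_order all_algebra.
From mathcomp Require Import all_classical all_reals all_analysis.
Set Implicit Arguments. Unset Strict Implicit. Unset Printing Implicit Defensive.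
Import Order.TTheory GRing.Theory Num.Theory.
Import numFieldNormedType.Exports.
Local Open Scope classical_set_scope.
Local Open Scope ring_scope.

Definition box (R : realType) (n : nat) (a b : 'rV[R]_n) : set 'rV[R]_n :=
  [set x | forall i, a ord0 i <= x ord0 i <= b ord0 i].

Definition box_vol (R : realType) (n : nat) (a b : 'rV[R]_n) : R :=
  \prod_(i < n) Num.max (b ord0 i - a ord0 i) 0.

(* n-dimensional Lebesgue (outer) measure: infimum of the total volume of
   countable covers by boxes (families indexed by a subset I of nat, so that
   the empty family is allowed).  On compact sets (the only sets to which it
   is applied below) it coincides with Lebesgue measure; for n = 0 it is the
   counting measure on the one-point space R^0. *)
Definition leb (R : realType) (n : nat) (A : set 'rV[R]_n) : \bar R :=
  ereal_inf [set s | exists (I : set nat) (a b : nat -> 'rV[R]_n),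
      A `<=` \bigcup_(k in I) box (a k) (b k) /\
      s = (\sum_(k <oo | k \in I) (box_vol (a k) (b k))%:E)%E].

Definition del_coord (R : realType) (m : nat) (j : 'I_m) (x : 'rV[R]_m)
  : 'rV[R]_m.-1 := \row_(i < m.-1) x ord0 (lift j i).

Definition proj_del (R : realType) (m : nat) (j : 'I_m) (A : set 'rV[R]_m)
  : set 'rV[R]_m.-1 := del_coord j @` A.

Definition body (R : realType) (m : nat) (A : set 'rV[R]_m) : Prop :=
  compact A /\ A `<=` [set x | forall i, 0 <= x ord0 i].

Definition deficiency (R : realType) (m : nat) (k : R) (A : set 'rV[R]_m)
  : \bar R :=
  (leb A - k%:E * \sum_(j < m) leb (proj_del j A))%E.

(* Main.v *)
Require Import Defs.
From HB Require Import structures.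
From mathcomp Require Import all_boot all_order all_algebra.
From mathcomp Require Import all_classical all_reals all_analysis.
From mathcomp Require Import lra.
Set Implicit Arguments. Unset Strict Implicit. Unset Printing Implicit Defensive.
Import Order.TTheory GRing.Theory Num.Theory.
Import numFieldNormedType.Exports.
Local Open Scope classical_set_scope.
Local Open Scope ring_scope.

Section S.
Variables (R : realType) (n : nat).

Definition Tn : Type := 'rV[R]_n.
HB.instance Definition _ := Pointed.on Tn.
Definition allm (A : set Tn) : Prop := True.
Lemma allm0 : allm set0. Proof. by []. Qed.
Lemma allmC A : allm A -> allm (~` A). Proof. by []. Qed.
Lemma allmU (F : (set Tn)^nat) : (forall k, allm (F k)) -> allm (\bigcup_k F k). Proof. by []. Qed.
HB.instance Definition _ := @isMeasurable.Build default_measure_display Tn allm allm0 allmC allmU.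

Definition mub (X : set Tn) : \bar R :=
  if pselect (X = set0) then 0%E else
  ereal_inf [set s | exists a b, X `<=` box a b /\ s = (box_vol a b)%:E].
Local Open Scope ereal_scope.

Lemma box_vol_ge0 (a b : 'rV[R]_n) : (0 <= box_vol a b)%R.
Proof. by apply: prodr_ge0 => i _; rewrite le_max lexx orbT. Qed.

Lemma mub0 : mub set0 = 0.
Proof. by rewrite /mub; case: (pselect (set0 = set0)). Qed.

Lemma mub_ge0 (X : set Tn) : 0 <= mub X.
Proof.
rewrite /mub; case: (pselect (X = set0)) => [//|XN]; apply: le_ereal_inf_tmp => s [a [b [_ sE]]]; rewrite sE.
by rewrite lee_fin box_vol_ge0.
Qed.

Lemma mub_le_box (X : set Tn) a b : X `<=` box a b -> mub X <= (box_vol a b)%:E.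
Proof.
move=> Xab; rewrite /mub; case: (pselect (X = set0)) => [X0|X0]; first by rewrite lee_fin box_vol_ge0.
by apply: ereal_inf_lbound; exists a, b.
Qed.

Lemma mu_ext_le_leb (X : set 'rV[R]_n) : mu_ext mub X <= leb X.
Proof.
apply: le_ereal_inf_tmp => s [I [a [b [XI ->]]]].
pose F k : set Tn := if pselect (I k) then box (a k) (b k) else set0.
apply: (@le_trans _ _ (\sum_(k <oo) mub (F k))).
  apply: ereal_inf_lbound; exists F => //; split => // x /XI [k Ik xk].
  by exists k => //; rewrite /F; case: pselect.
rewrite [leRHS]eseries_mkcond; apply: lee_nneseries => [k _ _|k _]; first exact: mub_ge0.
rewrite /F; case: pselect => Ik.
  by rewrite (_ : k \in I) ?mem_set//; exact: mub_le_box.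
by rewrite mub0; case: ifP => _ //; rewrite lee_fin box_vol_ge0.
Qed.

Lemma leb_le_mu_ext (X : set 'rV[R]_n) : leb X <= mu_ext mub X.
Proof.
apply: le_ereal_inf_tmp => s [A [_ XA] <-].
have [[k Ak]|] := pselect (exists k, mub (A k) = +oo).
  rewrite (@eseries_pinfty _ _ _ k) ?leey// => i _.
  by rewrite gt_eqF// (lt_le_trans _ (mub_ge0 _))// ltNy0.
move=> /forallNP Afin.
apply/lee_addgt0Pr => e e0.
pose P k (ab : 'rV[R]_n * 'rV[R]_n) := A k <> set0 ->
  A k `<=` box ab.1 ab.2 /\
  (box_vol ab.1 ab.2)%:E <= mub (A k) + (e / (2 ^ k.+1)%:R)%:E.
have [G PG] : {G : nat -> 'rV[R]_n * 'rV[R]_n & forall k, P k (G k)}.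
  apply: (@choice _ _ P) => k; rewrite /P.
  have [Ak0|Ak0] := pselect (A k = set0).
    by exists (0%R, 0%R).
  have ek : (0 < e / (2 ^ k.+1)%:R)%R by rewrite divr_gt0// ltr0n expn_gt0.
  have := Afin k; rewrite /mub; case: (pselect (A k = set0)) => // Ak1 /= Akfin.
  have /(lb_ereal_inf_adherent ek) : ereal_inf
    [set s | exists a b, A k `<=` box a b /\ s = (box_vol a b)%:E] \is a fin_num.
    rewrite fin_numE (introN eqP Akfin) andbT; apply/negP => /eqP inf_ny.
    have : (0 <= ereal_inf [set s | exists a b, A k `<=` box a b /\ s = (box_vol a b)%:E]).
      apply: le_ereal_inf_tmp => _ [a [b [_ ->]]]; by rewrite lee_fin box_vol_ge0.
    by rewrite inf_ny.
  move=> [x [a [b [Aab ->]]] xlt]; exists (a, b) => _; split => //.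
  exact: ltW.
pose I := [set k | A k <> set0].
apply: (@le_trans _ _ (\sum_(k <oo | k \in I) (box_vol (G k).1 (G k).2)%:E)).
  apply: ereal_inf_lbound; exists I, (fun k => (G k).1), (fun k => (G k).2); split => //.
  move=> x /XA [k _ Akx]; have Ak0 : A k <> set0 by move=> Ak; rewrite Ak in Akx.
  by exists k => //; exact: ((PG k Ak0).1).
apply: le_trans (epsilon_trick _ _ _) => //; last exact: ltW.
2: by move=> k; exact: mub_ge0.
rewrite [leLHS]eseries_mkcond; apply: lee_nneseries => [k _ _|k _].
  by case: ifP => _ //; rewrite lee_fin box_vol_ge0.
case: ifP => [/set_mem Ik|_]; first exact: (PG k Ik).2.
by rewrite adde_ge0 ?mub_ge0// lee_fin ltW// divr_gt0// ltr0n expn_gt0.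
Qed.

Lemma leb_mu_ext (X : set 'rV[R]_n) : leb X = mu_ext mub X.
Proof. by apply/eqP; rewrite eq_le leb_le_mu_ext mu_ext_le_leb. Qed.

Definition lebT (X : set Tn) : \bar R := leb X.

Lemma lebT0 : lebT set0 = 0.
Proof. by rewrite /lebT leb_mu_ext mu_ext0//; [exact: mub0|exact: mub_ge0]. Qed.
Lemma lebT_ge0 X : 0 <= lebT X.
Proof. by rewrite /lebT leb_mu_ext mu_ext_ge0//; exact: mub_ge0. Qed.
Lemma le_lebT : {homo lebT : A B / A `<=` B >-> A <= B}.
Proof. by move=> A B AB; rewrite /lebT !leb_mu_ext le_mu_ext. Qed.
Lemma lebT_sigma : sigma_subadditive lebT.
Proof.
move=> F; rewrite /lebT leb_mu_ext.
rewrite (eq_eseriesr (fun k _ => leb_mu_ext (F k))).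
exact: mu_ext_sigma_subadditive mub_ge0 F.
Qed.

HB.instance Definition _ := isOuterMeasure.Build R Tn lebT lebT0 lebT_ge0 le_lebT lebT_sigma.

Lemma maxsplit (a b c : R) :
  (Num.max (Num.min b c - a) 0 + Num.max (b - Num.max a c) 0 = Num.max (b - a) 0)%R.
Proof.
case: (leP b c) => bc; case: (leP a c) => ac;
rewrite ?(minEle, maxEle);
repeat (case: ifP => /= ?); lra.
Qed.

Definition setc (x : 'rV[R]_n) (i : 'I_n) (c : R) : 'rV[R]_n :=
  \row_j (if j == i then c else x ord0 j).

Lemma vol_split (a b : 'rV[R]_n) i c :
  (box_vol a (setc b i (Num.min (b ord0 i) c)) +
   box_vol (setc a i (Num.max (a ord0 i) c)) b = box_vol a b)%R.
Proof.
rewrite /box_vol (bigD1 i)//= [X in (_ + X)%R](bigD1 i)//= [RHS](bigD1 i)//=.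
rewrite !mxE !eqxx.
have -> : (\prod_(j < n | j != i) Num.max (setc b i (Num.min (b ord0 i) c) ord0 j - a ord0 j) 0
   = \prod_(j < n | j != i) Num.max (b ord0 j - a ord0 j) 0)%R.
  by apply: eq_bigr => j ji; rewrite mxE (negbTE ji).
have -> : (\prod_(j < n | j != i) Num.max (b ord0 j - setc a i (Num.max (a ord0 i) c) ord0 j) 0
   = \prod_(j < n | j != i) Num.max (b ord0 j - a ord0 j) 0)%R.
  by apply: eq_bigr => j ji; rewrite mxE (negbTE ji).
by rewrite -mulrDl maxsplit.
Qed.

Lemma leb_cover (X : set 'rV[R]_n) (I : set nat) (a b : nat -> 'rV[R]_n) :
  X `<=` \bigcup_(k in I) box (a k) (b k) ->
  leb X <= \sum_(k <oo | k \in I) (box_vol (a k) (b k))%:E.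
Proof. by move=> XI; apply: ereal_inf_lbound; exists I, a, b. Qed.

Definition Hs (i : 'I_n) (c : R) : set Tn := [set x | (x ord0 i <= c)%R].

Lemma Hs_cara i c : lebT.-caratheodory (Hs i c).
Proof.
apply: le_caratheodory_measurable => Y.
apply: le_ereal_inf_tmp => s [I [a [b [YI ->]]]].
apply: (@le_trans _ _ (\sum_(k <oo | k \in I) (box_vol (a k) (setc (b k) i (Num.min (b k ord0 i) c)))%:E
   + \sum_(k <oo | k \in I) (box_vol (setc (a k) i (Num.max (a k ord0 i) c)) (b k))%:E)).
  apply: leeD; apply: leb_cover.
    move=> x [/YI [k Ik xk] xH]; exists k => // j; rewrite mxE.
    case: eqP => [->|_]; last exact: xk.
    by have := xk i; rewrite le_min xH => /andP[-> ->].
  move=> x [/YI [k Ik xk] xH]; exists k => // j; rewrite mxE.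
  case: eqP => [->|_]; last exact: xk.
  have := xk i; rewrite ge_max => /andP[-> ->] /=; rewrite andbT.
  by rewrite leNgt; apply/negP => xc; apply: xH; rewrite /Hs /= ltW.
rewrite -nneseriesD; last 2 first.
- by move=> k _ _; rewrite lee_fin box_vol_ge0.
- by move=> k _ _; rewrite lee_fin box_vol_ge0.
apply: lee_nneseries => [k _ _|k _].
  by rewrite -EFinD lee_fin addr_ge0 ?box_vol_ge0.
by rewrite -EFinD vol_split.
Qed.

Definition CT := caratheodory_type lebT.

Lemma mHs i c : measurable ([set x : 'rV[R]_n | (x ord0 i <= c)%R] : set CT).
Proof. exact: Hs_cara. Qed.

Lemma mLs i c : measurable ([set x : 'rV[R]_n | (x ord0 i < c)%R] : set CT).
Proof.
rewrite (_ : [set x : 'rV[R]_n | (x ord0 i < c)%R] =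
   \bigcup_k [set x : 'rV[R]_n | (x ord0 i <= c - k.+1%:R^-1)%R]).
  by apply: bigcupT_measurable => k; exact: mHs.
apply/seteqP; split => x /=.
  move=> xc; have [k hk] := ltr_add_invr xc; exists k => //=.
  by rewrite lerBrDr ltW.
move=> [k _ /= h]; apply: le_lt_trans h _.
by rewrite ltrBlDr ltrDl invr_gt0 ltr0n.
Qed.

Lemma mbox (a b : 'rV[R]_n) : measurable (box a b : set CT).
Proof.
rewrite (_ : box a b = ~` \bigcup_(i : 'I_n)
   ~` ([set x : 'rV[R]_n | (x ord0 i <= b ord0 i)%R] `&`
       ~` [set x : 'rV[R]_n | (x ord0 i < a ord0 i)%R])).
  apply: measurableC; apply: countable_bigcupT_measurable; first exact: countableP.
  move=> i; apply: measurableC; apply: measurableI; first exact: mHs.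
  by apply: measurableC; exact: mLs.
apply/seteqP; split => x /=.
  move=> xab [i _ /=]; apply; have /andP[h1 h2] := xab i; split => //=.
  by apply/negP; rewrite -leNgt.
move=> h i; apply/andP; apply: contrapT => hn; apply: h; exists i => //= -[h2 h1].
by apply: hn; split => //; rewrite leNgt; apply/negP.
Qed.

Definition rvq (p : 'rV[rat]_n) : 'rV[R]_n := map_mx ratr p.

Lemma mopen (O : set 'rV[R]_n) : open O -> measurable (O : set CT).
Proof.
move=> oO.
pose F (pq : 'rV[rat]_n * 'rV[rat]_n) : set 'rV[R]_n :=
  if pselect (box (rvq pq.1) (rvq pq.2) `<=` O) then box (rvq pq.1) (rvq pq.2) else set0.
rewrite (_ : O = \bigcup_pq F pq).
  apply: countable_bigcupT_measurable; first exact: countableP.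
  move=> pq; rewrite /F; case: pselect => h; [exact: mbox | exact: measurable0].
apply/seteqP; split => [y Oy|y [pq _]]; last by rewrite /F; case: pselect => [h /h|] //.
move: oO; rewrite openE => /(_ y Oy) /nbhs_ballP [e /= e0 eO].
have /choice [p hp] : forall j : 'I_n, exists r : rat, ratr r \in `](y ord0 j - e), (y ord0 j)[%R.
  by move=> j; apply: rat_in_itvoo; rewrite ltrBlDr ltrDl.
have /choice [q hq] : forall j : 'I_n, exists r : rat, ratr r \in `](y ord0 j), (y ord0 j + e)[%R.
  by move=> j; apply: rat_in_itvoo; rewrite ltrDl.
have sub : box (rvq (\row_j p j)) (rvq (\row_j q j)) `<=` O.
  move=> x xb; apply: eO; split => // i j; rewrite (ord1 i).
  have /andP[h1 h2] := xb j; move: h1 h2; rewrite !mxE => h1 h2.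
  move: (hp j) (hq j); rewrite !in_itv /= => /andP[p1 p2] /andP[q1 q2].
  rewrite /ball /= ltr_distl; apply/andP; split; lra.
exists (\row_j p j, \row_j q j) => //; rewrite /F; case: pselect => // h0.
move=> j; rewrite !mxE; move: (hp j) (hq j); rewrite !in_itv /= => /andP[p1 p2] /andP[q1 q2].
by rewrite !ltW.
Qed.

Lemma mcompact (K : set 'rV[R]_n) : compact K -> lebT.-caratheodory K.
Proof.
move=> cK; have : measurable (K : set CT); last by [].
rewrite -[K]setCK; apply: measurableC; apply: mopen; apply: closed_openC.
by apply: compact_closed => //; exact: norm_hausdorff.
Qed.

Lemma modular (X Y : set 'rV[R]_n) : lebT.-caratheodory X ->
  leb (X `|` Y) + leb (X `&` Y) = leb X + leb Y.
Proof.
move=> mX; have h1 := mX (X `|` Y); have h2 := mX Y.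
have e1 : (X `|` Y) `&` X = X by apply/seteqP; split => x; [case|move=> Xx; split => //; left].
have e2 : (X `|` Y) `&` ~` X = Y `&` ~` X.
  apply/seteqP; split => x.
    by move=> [[Xx|Yx] nX]; [case: (nX Xx)|split].
  by move=> [Yx nX]; split => //; right.
rewrite /lebT e1 e2 in h1 h2 *.
rewrite h1 h2 (setIC Y X) -addeA [X in _ + X = _]addeC addeA.
by [].
Qed.

Lemma coord_bound (K : set 'rV[R]_n) : compact K ->
  exists M, forall x, K x -> forall i, (`|x ord0 i| <= M)%R.
Proof.
move=> /compact_bounded [M [Mreal normAltM]]; exists (M + 1)%R => v Kv i.
apply: le_trans (normAltM (M + 1)%R _ v Kv); last by rewrite ltrDl.
have /mapP[j Hj ->] : (`|v ord0 i| \in [seq `|v x.1 x.2| | x : 'I_1 * 'I_n])%R.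
  by apply/mapP; exists (ord0, i) => //=; rewrite mem_enum.
by rewrite [leRHS]/Num.norm /= mx_normrE; apply/bigmax_geP; right => /=; exists j.
Qed.

Lemma sum_single (v : R) : \sum_(k <oo | k \in [set 0%N]) v%:E = v%:E.
Proof.
apply: lim_near_cst => //; near=> N.
have N0 : (0 < N)%N by near: N; exists 1%N.
rewrite big_mkcond /= -(prednK N0) big_nat_recl // mem_set // big1 ?addr0 // => i _.
by rewrite memNset.
Unshelve. all: by end_near. Qed.

Lemma leb_fin (X : set 'rV[R]_n) M : (forall x, X x -> forall i, (`|x ord0 i| <= M)%R) ->
  leb X \is a fin_num.
Proof.
move=> XM; rewrite ge0_fin_numE; last exact: (lebT_ge0 X).
apply: (@le_lt_trans _ _ (box_vol (const_mx (- M)%R) (const_mx M))%:E); last exact: ltey.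
rewrite -sum_single; apply: (@leb_cover X [set 0%N] (fun=> const_mx (- M)%R) (fun=> const_mx M)).
move=> x Xx; exists 0%N => // i; rewrite !mxE.
by have := XM x Xx i; rewrite ler_norml.
Qed.
End S.

Lemma del_coord_cont (R : realType) m (j : 'I_m) : continuous (@del_coord R m j).
Proof.
move=> x A /nbhs_ballP [e e0 eA]; apply/nbhs_ballP; exists e => // y [_ hy].
apply: eA; split => // i k; rewrite !mxE; exact: hy.
Qed.

Lemma final_real (R : realType) (k u i a b su si sa sb : R) : 0 < k ->
  u + i = a + b -> su + si <= sa + sb ->
  (a%:E - k%:E * sa%:E + (b%:E - k%:E * sb%:E) <=
   u%:E - k%:E * su%:E + (i%:E - k%:E * si%:E))%E.
Proof.
move=> k0 e1 e2; rewrite -!EFinM -!EFinB -!EFinD lee_fin.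
have : k * (su + si) <= k * (sa + sb) by rewrite ler_pM2l.
lra.
Qed.

Theorem lemma4 (R : realType) (m : nat) (k : R) (A1 A2 : set 'rV[R]_m) :
  0 < k -> body A1 -> body A2 ->
  (deficiency k (A1 `|` A2) + deficiency k (A1 `&` A2)
     >= deficiency k A1 + deficiency k A2)%E.
Proof.
move=> k0 [cA1 _] [cA2 _].
have [M1 h1] := coord_bound cA1; have [M2 h2] := coord_bound cA2.
pose M := Num.max M1 M2.
have hU : forall X, X `<=` A1 `|` A2 -> forall x, X x -> forall i, `|x ord0 i| <= M.
  by move=> X XA x /XA [Ax|Ax] i; rewrite le_max ?(h1 _ Ax) ?(h2 _ Ax) ?orbT.
have hP : forall X, X `<=` A1 `|` A2 -> forall j, forall y, proj_del j X y ->
    forall i, `|y ord0 i| <= M.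
  move=> X XA j _ [x Xx <-] i; rewrite mxE; exact: hU Xx _.
have fX : forall X, X `<=` A1 `|` A2 -> leb X \is a fin_num.
  by move=> X XA; exact: leb_fin (hU X XA).
have fS : forall X, X `<=` A1 `|` A2 ->
    (\sum_(j < m) leb (proj_del j X))%E \is a fin_num.
  move=> X XA; apply/sum_fin_numP => j _ _; exact: leb_fin (hP X XA j).
have sU : A1 `|` A2 `<=` A1 `|` A2 by [].
have sI : A1 `&` A2 `<=` A1 `|` A2 by move=> x [? _]; left.
have s1 : A1 `<=` A1 `|` A2 by move=> x ?; left.
have s2 : A2 `<=` A1 `|` A2 by move=> x ?; right.
have eqA := modular A2 (mcompact cA1).
have eqP : forall j : 'I_m,
  (leb (proj_del j (A1 `|` A2)) + leb (proj_del j (A1 `&` A2)) <=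
   leb (proj_del j A1) + leb (proj_del j A2))%E.
  move=> j; rewrite /proj_del image_setU.
  have cP1 : compact (del_coord j @` A1).
    apply: continuous_compact => //; apply: continuous_subspaceT; exact: del_coord_cont.
  rewrite -(modular (del_coord j @` A2) (mcompact cP1)).
  apply: leeD2l; apply: le_lebT => _ [x [a1 a2] <-]; split; exists x => //.
have eqS : (\sum_(j < m) leb (proj_del j (A1 `|` A2)) + \sum_(j < m) leb (proj_del j (A1 `&` A2)) <=
   \sum_(j < m) leb (proj_del j A1) + \sum_(j < m) leb (proj_del j A2))%E.
  by rewrite -!big_split /=; apply: lee_sum => j _; exact: eqP.
rewrite /deficiency.
move: eqA eqS.
rewrite -[leb (A1 `|` A2)](fineK (fX _ sU)) -[leb (A1 `&` A2)](fineK (fX _ sI)).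
rewrite -[leb A1](fineK (fX _ s1)) -[leb A2](fineK (fX _ s2)).
rewrite -[(\sum_(j < m) leb (proj_del j (A1 `|` A2)))%E](fineK (fS _ sU)).
rewrite -[(\sum_(j < m) leb (proj_del j (A1 `&` A2)))%E](fineK (fS _ sI)).
rewrite -[(\sum_(j < m) leb (proj_del j A1))%E](fineK (fS _ s1)).
rewrite -[(\sum_(j < m) leb (proj_del j A2))%E](fineK (fS _ s2)).
rewrite -!EFinD lee_fin => eA eS.
have eA2 := EFin_inj eA.
rewrite lee_fin.
set a := fine (leb A1) in eA2 *; set b := fine (leb A2) in eA2 *.
set u := fine (leb (A1 `|` A2)) in eA2 *.
set i := fine (leb (A1 `&` A2)) in eA2 *.
set sa := fine (\sum_(j < m) leb (proj_del j A1))%E.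
set sb := fine (\sum_(j < m) leb (proj_del j A2))%E.
set su := fine (\sum_(j < m) leb (proj_del j (A1 `|` A2)))%E.
set si := fine (\sum_(j < m) leb (proj_del j (A1 `&` A2)))%E.
have : k * (su + si) <= k * (sa + sb) by rewrite ler_pM2l.
move=> hk. clearbody a b u i sa sb su si. lra.
Qed.
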